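(* Let $\pi_1,\pi_2,\pi_3,\pi_4$ be paths of length $\ell$ in a simple graph such that $V(\pi_3)\cap V(\pi_4)\neq\emptyset$, $|E(\pi_3)\cup E(\pi_4)|=2\ell-j$ and $|(E(\pi_1)\cup E(\pi_2))\cap(E(\pi_3)\cup E(\pi_4))|=j'$, where $0\le j\le\ell$ and $1\le j'\le 2\ell-j$. Then $$|V(\pi_3)\cap V(\pi_4)|+|(V(\pi_3)\cup V(\pi_4))\cap(V(\pi_1)\cup V(\pi_2))|\ge j+j'+2.$$
   Context: A path of length $\ell$ is a sequence $(v_0,\dots,v_\ell)$ of distinct vertices with edges $(v_{i-1},v_i)$; $V(\pi)$ and $E(\pi)$ denote its vertex and edge sets. *)

(* Defs.v *)
From mathcomp Require Import all_boot.
Set Implicit Arguments. Unset Strict Implicit. Unset Printing Implicit Defensive.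

Definition simple_graph (T : finType) (e : rel T) : Prop :=
  irreflexive e /\ symmetric e.

Definition steps (T : Type) (p : seq T) : seq (T * T) := zip p (behead p).

Definition is_path (T : finType) (e : rel T) (l : nat) (p : seq T) : Prop :=
  [/\ size p = l.+1, uniq p & all (fun x => e x.1 x.2) (steps p)].

Definition Vp (T : finType) (p : seq T) : {set T} := [set v in p].

(* E(pi): the set of edges {v_{i-1}, v_i}; an (undirected) edge is
   represented as the 2-element set of its endpoints. *)
Definition Ep (T : finType) (p : seq T) : {set {set T}} :=
  [set [set x.1; x.2] | x in steps p].

(* Main.v *)
Require Import Defs.
From mathcomp Require Import all_boot zify.
Set Implicit Arguments. Unset Strict Implicit. Unset Printing Implicit Defensive.

Section S.
Variable T : finType.

Lemma steps_mem (p : seq T) x : x \in steps p -> x.1 \in p /\ x.2 \in p.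
Proof.
elim: p => [|a q IH] //=; case: q IH => [|b r] IH //=.
rewrite /steps /= in IH *; rewrite in_cons => /orP [/eqP -> | H] /=.
  by rewrite !in_cons !eqxx ?orbT.
have [H1 H2] := IH H; rewrite !in_cons in H1 H2 *.
by rewrite H1 H2 ?orbT.
Qed.

Lemma Ep_sub (p : seq T) f : f \in Ep p -> f \subset Vp p.
Proof.
case/imsetP => x /steps_mem [h1 h2] ->.
by apply/subsetP => v; rewrite !inE => /orP [] /eqP ->; rewrite ?h1 ?h2.
Qed.

Lemma cross_path (p : seq T) (S : {set T}) :
  has (mem S) p -> ~~ all (mem S) p ->
  exists x y, [/\ [set x; y] \in Ep p, x \in S & y \notin S].
Proof.
elim: p => [|a q IH] //=; case: q IH => [|b r] IH /=.
  by rewrite orbF andbT => ->.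
have Hst : (a, b) \in steps [:: a, b & r] by rewrite /steps /= in_cons eqxx.
have He : [set a; b] \in Ep [:: a, b & r] by rewrite /Ep; exact: (imset_f _ Hst).
have Hsub : forall f, f \in Ep (b :: r) -> f \in Ep [:: a, b & r].
  move=> f /imsetP [x Hx ->]; apply: imset_f; by rewrite /steps /= in_cons Hx orbT.
case: (boolP (a \in S)) => Ha; case: (boolP (b \in S)) => Hb.
- move=> _ H; have h1 : has (mem S) (b::r) by rewrite /= Hb.
  have h2 : ~~ all (mem S) (b::r) by move: H; rewrite /= Hb.
  have [x [y [H1 H2 H3]]] := IH h1 h2.
  by exists x, y; split => //; apply: Hsub.
- by move=> _ _; exists a, b; split.
- by move=> _ _; exists b, a; split => //; rewrite setUC.
- move=> H _; have h1 : has (mem S) (b::r) by move: H; rewrite /= (negbTE Hb) ?(negbTE Ha).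
  have h2 : ~~ all (mem S) (b::r) by rewrite /= (negbTE Hb).
  have [x [y [H1 H2 H3]]] := IH h1 h2.
  by exists x, y; split => //; apply: Hsub.
Qed.
End S.

Section T2.
Variable T : finType.

Lemma grow (E : {set {set T}}) (V : {set T}) :
 (forall S : {set T}, S != set0 -> S \subset V -> ~~ (V \subset S) ->
    exists x y, [/\ [set x; y] \in E, x \in S, y \in V & y \notin S]) ->
 forall S, S != set0 -> S \subset V ->
   #|V :\: S| <= #|[set f in E | ~~ (f \subset S)]|.
Proof.
move=> Hc S.
move Hn: #|V :\: S| => n; elim: n S Hn => [|n IH] S Hn HS0 HSV; first by [].
have HVS : ~~ (V \subset S).
  by apply/negP; rewrite -setD_eq0 => /eqP H; move: Hn; rewrite H cards0.
have [x [y [Hxy Hx Hy Hny]]] := Hc S HS0 HSV HVS.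
have Hn' : #|V :\: (y |: S)| = n.
  have := cardsD1 y (V :\: S); rewrite Hn !inE Hy Hny /=; move=> [->].
  by apply: eq_card => v; rewrite !inE negb_or andbA [_ && (v \in V)]andbC.
have Hle := IH (y |: S) Hn'.
have H1 : y |: S != set0 by apply/set0Pn; exists y; rewrite !inE eqxx.
have H2 : y |: S \subset V by rewrite subUset sub1set Hy HSV.
have := Hle H1 H2 => {}Hle.
suff : [set f in E | ~~ (f \subset y |: S)] \proper [set f in E | ~~ (f \subset S)].
  by move/proper_card => h; apply: leq_trans h.
apply/properP; split.
  apply/subsetP => f; rewrite !inE => /andP [-> h]; apply/negP => h'; move/negP: h; apply.
  by apply: subset_trans h' (subsetUr _ _).
exists [set x; y]; rewrite !inE Hxy /=.
  by apply/negP => /subsetP /(_ y); rewrite !inE eqxx orbT => /(_ isT); apply/negP.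
rewrite negbK; apply/subsetP => v; rewrite !inE => /orP [] /eqP ->; rewrite ?eqxx ?Hx ?orbT //.
Qed.
End T2.

Lemma Ep_ne (T : finType) (p : seq T) f : f \in Ep p -> exists v, v \in f.
Proof. by case/imsetP => x _ ->; exists x.1; rewrite !inE eqxx. Qed.

Lemma card_Vp (T : finType) (e : rel T) l (p : seq T) : is_path e l p -> #|Vp p| = l.+1.
Proof. by case=> hs hu _; rewrite /Vp cardsE; move/card_uniqP: hu => ->. Qed.

Theorem lemma3p8 (T : finType) (e : rel T) (l j j' : nat)
    (p1 p2 p3 p4 : seq T) :
  simple_graph e ->
  is_path e l p1 -> is_path e l p2 -> is_path e l p3 -> is_path e l p4 ->
  Vp p3 :&: Vp p4 != set0 ->
  #|Ep p3 :|: Ep p4| = 2 * l - j ->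
  #|(Ep p1 :|: Ep p2) :&: (Ep p3 :|: Ep p4)| = j' ->
  j <= l -> 1 <= j' <= 2 * l - j ->
  #|Vp p3 :&: Vp p4| + #|(Vp p3 :|: Vp p4) :&: (Vp p1 :|: Vp p2)| >= j + j' + 2.
Proof.
move=> _ P1 P2 P3 P4 HA HE HF Hj /andP [Hj1 Hj2].
set E := Ep p3 :|: Ep p4.
set F := (Ep p1 :|: Ep p2) :&: E.
set U := Vp p3 :|: Vp p4.
set W := Vp p1 :|: Vp p2.
set S := [set v | [exists f in F, v \in f]].
have HEU : forall f, f \in E -> f \subset U.
  move=> f; rewrite !inE => /orP [] /Ep_sub h; apply: subset_trans h _.
    exact: subsetUl. exact: subsetUr.
have HSU : S \subset U.
  apply/subsetP => v; rewrite inE => /existsP [f /andP [hf hv]].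
  move: hf; rewrite inE => /andP [_ /HEU /subsetP]; exact.
have HSW : S \subset W.
  apply/subsetP => v; rewrite inE => /existsP [f /andP [hf hv]].
  move: hf; rewrite inE => /andP [hf _]; move: hf; rewrite inE => /orP [] /Ep_sub /subsetP h;
  rewrite inE h ?orbT //.
have HS0 : S != set0.
  have : 0 < #|F| by rewrite HF.
  rewrite card_gt0 => /set0Pn [f hf]; move: (hf); rewrite inE => /andP [_].
  rewrite inE => /orP [] /Ep_ne [v hv]; apply/set0Pn; exists v; rewrite inE;
  apply/existsP; exists f; by rewrite hf hv.
have Hc : forall S0 : {set T}, S0 != set0 -> S0 \subset U -> ~~ (U \subset S0) ->
    exists x y, [/\ [set x; y] \in E, x \in S0, y \in U & y \notin S0].
  move=> S0 /set0Pn [s hs] hS0U /subsetPn [z hz hzn].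
  have [c] := set0Pn _ HA; rewrite inE => /andP [hc3 hc4].
  have help : forall p, Ep p \subset E -> Vp p \subset U -> has (mem S0) p ->
      ~~ all (mem S0) p ->
      exists x y, [/\ [set x; y] \in E, x \in S0, y \in U & y \notin S0].
    move=> p hE hV h1 h2; have [x [y [hxy hx hy]]] := cross_path h1 h2.
    exists x, y; split => //; first exact: (subsetP hE).
    apply: (subsetP hV); apply: (subsetP (Ep_sub hxy)); by rewrite !inE eqxx orbT.
  have hE3 : Ep p3 \subset E by exact: subsetUl.
  have hE4 : Ep p4 \subset E by exact: subsetUr.
  have hV3 : Vp p3 \subset U by exact: subsetUl.
  have hV4 : Vp p4 \subset U by exact: subsetUr.
  move: hc3 hc4; rewrite !inE => hc3 hc4.
  case: (boolP (c \in S0)) => hc.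
    move: hz; rewrite !inE => /orP [] hz.
      apply: help hE3 hV3 _ _; first by apply/hasP; exists c.
      by apply/allPn; exists z.
    apply: help hE4 hV4 _ _; first by apply/hasP; exists c.
    by apply/allPn; exists z.
  move: (subsetP hS0U s hs); rewrite !inE => /orP [] hs'.
    apply: help hE3 hV3 _ _; first by apply/hasP; exists s.
    by apply/allPn; exists c.
  apply: help hE4 hV4 _ _; first by apply/hasP; exists s.
  by apply/allPn; exists c.
have Hg := grow Hc HS0 HSU.
have HFE : F \subset E by exact: subsetIr.
have Hsub : [set f in E | ~~ (f \subset S)] \subset E :\: F.
  apply/subsetP => f; rewrite inE => /andP [hfE hn]; rewrite inE hfE andbT.
  apply/negP => hfF; move/negP: hn; apply; apply/subsetP => v hv.
  rewrite inE; apply/existsP; exists f; by rewrite hfF hv.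
have Hc1 := subset_leq_card Hsub.
have Hc2 : #|E :\: F| = #|E| - #|F| by rewrite cardsD (setIidPr HFE).
have Hc3 : #|U :\: S| = #|U| - #|S| by rewrite cardsD (setIidPr HSU).
have Hc4 : #|S| <= #|U :&: W| by apply: subset_leq_card; rewrite subsetI HSU HSW.
have Hc5 := cardsUI (Vp p3) (Vp p4).
rewrite (card_Vp P3) (card_Vp P4) in Hc5.
have Hc6 : #|S| <= #|U| by apply: subset_leq_card.
have Hc7 : #|F| <= #|E| by apply: subset_leq_card.
rewrite -/U -/W; move: Hc1 Hc2 Hc3 Hc4 Hc5 Hc6 Hc7 Hg HE HF; rewrite -/E -/F -/U.
lia.
Qed.
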